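(* Let $\mathscr M\subset ba(\mathcal A)$. There exists $\lambda\in ba(\mathcal A)$ with $\mathscr M\subset ba(\mathcal A,\lambda)$ if and only if $\mathscr M\subset ba(\mathcal A,m)$ for some $m\in\mathbf A(\mathscr M)$.
   Context: $\mathcal A$ algebra of subsets of $\Omega$; $ba(\mathcal A)$ bounded finitely additive real set functions with $\|\mu\|=|\mu|(\Omega)$. $ba(\mathcal A,\lambda)=\{\mu\in ba(\mathcal A):\mu\ll\lambda\}$, where $\mu\ll\lambda$ means for every $\varepsilon>0$ there is $\delta>0$ with $|\lambda|(A)<\delta\Rightarrow|\mu|(A)<\varepsilon$. $\mathbf A(\mathscr M)=\{\sum_n\alpha_n\frac{|\mu_n|}{1\vee\|\mu_n\|}:\mu_n\in\mathscr M,\ \alpha_n\ge0,\ \sum_n\alpha_n=1\}$. *)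

(* Defs.v *)
From Stdlib Require Import Reals Lra List ClassicalEpsilon.
Open Scope R_scope.

Definition set (X : Type) := X -> Prop.
Definition setfun (X : Type) := set X -> R.

Definition is_algebra {X : Type} (A : set (set X)) : Prop :=
  A (fun _ => True) /\
  (forall E, A E -> A (fun x => ~ E x)) /\
  (forall E F, A E -> A F -> A (fun x => E x \/ F x)).

Definition disjoint {X : Type} (E F : set X) : Prop := forall x, ~ (E x /\ F x).

Definition is_partition {X : Type} (A : set (set X)) (E : set X) (L : list (set X)) : Prop :=
  (forall F, In F L -> A F) /\
  (forall i j, (i < length L)%nat -> (j < length L)%nat -> i <> j ->
     disjoint (nth i L (fun _ => False)) (nth j L (fun _ => False))) /\
  (forall x, E x <-> exists F, In F L /\ F x).

Definition abs_sum {X : Type} (mu : setfun X) (L : list (set X)) : R :=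
  fold_right (fun F s => Rabs (mu F) + s) 0 L.

Definition var_values {X : Type} (A : set (set X)) (mu : setfun X) (E : set X) : R -> Prop :=
  fun s => exists L, is_partition A E L /\ s = abs_sum mu L.

(* |mu|(E): total variation of mu on E (supremum over finite A-partitions of E);
   junk value if the supremum does not exist. *)
Definition var {X : Type} (A : set (set X)) (mu : setfun X) (E : set X) : R :=
  epsilon (inhabits 0) (fun v => is_lub (var_values A mu E) v).

Definition bnorm {X : Type} (A : set (set X)) (mu : setfun X) : R :=
  var A mu (fun _ => True).

Definition fin_additive {X : Type} (A : set (set X)) (mu : setfun X) : Prop :=
  forall E F, A E -> A F -> disjoint E F -> mu (fun x => E x \/ F x) = mu E + mu F.

Definition ba {X : Type} (A : set (set X)) (mu : setfun X) : Prop :=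
  fin_additive A mu /\ exists K, forall s, var_values A mu (fun _ => True) s -> s <= K.

Definition abs_cont {X : Type} (A : set (set X)) (mu lam : setfun X) : Prop :=
  forall eps, 0 < eps -> exists delta, 0 < delta /\
    forall E, A E -> var A lam E < delta -> var A mu E < eps.

Definition in_ba_ac {X : Type} (A : set (set X)) (lam mu : setfun X) : Prop :=
  ba A mu /\ abs_cont A mu lam.

Definition in_AM {X : Type} (A : set (set X)) (M : set (setfun X)) (m : setfun X) : Prop :=
  exists (mu : nat -> setfun X) (alpha : nat -> R),
    (forall n, M (mu n)) /\ (forall n, 0 <= alpha n) /\ infinite_sum alpha 1 /\
    forall E, A E ->
      infinite_sum (fun n => alpha n * var A (mu n) E / Rmax 1 (bnorm A (mu n))) (m E).

(* Main.v *)
Require Import Defs.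
From Stdlib Require Import Reals Lra Lia List ClassicalEpsilon FunctionalExtensionality PropExtensionality Classical Cantor.
Open Scope R_scope.

Lemma set_ext {X : Type} (E F : set X) : (forall x, E x <-> F x) -> E = F.
Proof. intros H; apply functional_extensionality; intro x; apply propositional_extensionality; auto. Qed.

Lemma alg_full {X} (A : set (set X)) : is_algebra A -> A (fun _ => True).
Proof. intros [H _]; exact H. Qed.
Lemma alg_compl {X} (A : set (set X)) E : is_algebra A -> A E -> A (fun x => ~ E x).
Proof. intros [_ [H _]]; apply H. Qed.
Lemma alg_union {X} (A : set (set X)) E F : is_algebra A -> A E -> A F -> A (fun x => E x \/ F x).
Proof. intros [_ [_ H]]; apply H. Qed.
Lemma alg_inter {X} (A : set (set X)) E F : is_algebra A -> A E -> A F -> A (fun x => E x /\ F x).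
Proof.
  intros HA HE HF.
  replace (fun x => E x /\ F x) with (fun x => ~ ((fun y => ~ E y \/ ~ F y) x)).
  - apply alg_compl; auto. apply alg_union; auto; apply alg_compl; auto.
  - apply set_ext; intro x; split; [intro H; apply NNPP; intro H'; apply H; tauto | tauto].
Qed.
Lemma alg_diff {X} (A : set (set X)) E F : is_algebra A -> A E -> A F -> A (fun x => E x /\ ~ F x).
Proof. intros HA HE HF; apply alg_inter; auto; apply alg_compl; auto. Qed.
Lemma alg_empty {X} (A : set (set X)) : is_algebra A -> A (fun _ => False).
Proof.
  intros HA. replace (fun _ : X => False) with (fun x : X => ~ (fun _ : X => True) x).
  - apply alg_compl; auto; apply alg_full; auto.
  - apply set_ext; intro; tauto.
Qed.

Definition PA {X} (A : set (set X)) (nu : setfun X) :=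
  fin_additive A nu /\ forall E, A E -> 0 <= nu E.

Lemma add_empty {X} (A : set (set X)) nu : is_algebra A -> fin_additive A nu -> nu (fun _ => False) = 0.
Proof.
  intros HA Hadd.
  assert (H := Hadd (fun _ => False) (fun _ => False) (alg_empty A HA) (alg_empty A HA)).
  assert (Hd : disjoint (fun _ : X => False) (fun _ : X => False)) by (intros x; tauto).
  specialize (H Hd); cbv beta in H.
  replace (fun x : X => False \/ False) with (fun _ : X => False) in H.
  - lra.
  - apply set_ext; intro; tauto.
Qed.

Lemma part_cons {X} (A : set (set X)) E F L : is_algebra A -> A E ->
  is_partition A E (F :: L) ->
  A F /\ A (fun x => E x /\ ~ F x) /\ is_partition A (fun x => E x /\ ~ F x) L /\
  E = (fun x => F x \/ (E x /\ ~ F x)) /\ disjoint F (fun x => E x /\ ~ F x).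
Proof.
  intros HA HE [H1 [H2 H3]].
  assert (HF : A F) by (apply H1; left; auto).
  split; [auto|]. split; [apply alg_diff; auto|]. split; [|split].
  - split; [intros G HG; apply H1; right; auto|]. split.
    + intros i j Hi Hj Hij. apply (H2 (S i) (S j)); simpl; lia.
    + intro x; split.
      * intros [Hx Hnx]. destruct (proj1 (H3 x) Hx) as [G [[<-|HG] Gx]]; [tauto|eauto].
      * intros [G [HG Gx]]. split; [apply H3; exists G; split; [right|]; auto|].
        intro Fx. destruct (In_nth L G (fun _ => False) HG) as [n [Hn Hnth]].
        apply (H2 0%nat (S n) ltac:(simpl; lia) ltac:(simpl; lia) ltac:(lia) x); simpl.
        rewrite Hnth; auto.
  - apply set_ext; intro x; split.
    + intro Ex. destruct (classic (F x)); tauto.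
    + intros [Fx|[Ex _]]; auto. apply H3; exists F; split; [left|]; auto.
  - intros x [? [? ?]]; tauto.
Qed.

Lemma part_sum {X} (A : set (set X)) nu : is_algebra A -> fin_additive A nu ->
  forall L E, A E -> is_partition A E L -> fold_right (fun F s => nu F + s) 0 L = nu E.
Proof.
  intros HA Hadd L. induction L as [|F L IH]; intros E HE HP.
  - simpl. replace E with (fun _ : X => False). rewrite (add_empty A nu); auto.
    apply set_ext; intro x; destruct HP as [_ [_ H3]]; rewrite H3; split; [tauto|].
    intros [G [[] _]].
  - destruct (part_cons A E F L HA HE HP) as [HF [HE' [HP' [Heq Hd]]]].
    simpl. rewrite (IH _ HE' HP'). transitivity (nu (fun x => F x \/ (E x /\ ~ F x))).
    + rewrite Hadd; auto.
    + f_equal; symmetry; exact Heq.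
Qed.

Lemma part_single {X} (A : set (set X)) E : A E -> is_partition A E (E :: nil).
Proof.
  intros HE; split; [intros F [<-|[]]; auto|]. split.
  - intros i j Hi Hj Hij; simpl in *; lia.
  - intro x; split; [intro; exists E; split; [left|]; auto|intros [G [[<-|[]] Gx]]; auto].
Qed.

Lemma part_elem {X} (A : set (set X)) E L F x : is_partition A E L -> In F L -> F x -> E x.
Proof. intros [_ [_ H]] HF Fx; apply H; eauto. Qed.

Lemma part_app {X} (A : set (set X)) E F L1 L2 : is_partition A E L1 -> is_partition A F L2 ->
  disjoint E F -> is_partition A (fun x => E x \/ F x) (L1 ++ L2).
Proof.
  intros P1 P2 HEF. pose proof P1 as [A1 [D1 U1]]. pose proof P2 as [A2 [D2 U2]].
  split; [intros G HG; destruct (in_app_or _ _ _ HG); auto|]. split.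
  - intros i j Hi Hj Hij. rewrite length_app in Hi, Hj.
    destruct (Nat.lt_ge_cases i (length L1)) as [Ii|Ii];
    destruct (Nat.lt_ge_cases j (length L1)) as [Ij|Ij].
    + rewrite !app_nth1; try lia; auto.
    + rewrite app_nth1, app_nth2; try lia. intros x [H1 H2]. apply (HEF x); split.
      * apply (part_elem A E L1 _ x P1 (@nth_In _ i L1 (fun _ => False) ltac:(lia))); exact H1.
      * apply (part_elem A F L2 _ x P2 (@nth_In _ (j - length L1) L2 (fun _ => False) ltac:(lia))); exact H2.
    + rewrite app_nth2, app_nth1; try lia. intros x [H1 H2]. apply (HEF x); split.
      * apply (part_elem A E L1 _ x P1 (@nth_In _ j L1 (fun _ => False) ltac:(lia))); exact H2.
      * apply (part_elem A F L2 _ x P2 (@nth_In _ (i - length L1) L2 (fun _ => False) ltac:(lia))); exact H1.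
    + rewrite !app_nth2; try lia. apply D2; lia.
  - intro x; split.
    + intros [Ex|Fx]; [destruct (proj1 (U1 x) Ex) as [G [? ?]]|destruct (proj1 (U2 x) Fx) as [G [? ?]]];
        exists G; split; auto; apply in_or_app; auto.
    + intros [G [HG Gx]]; destruct (in_app_or _ _ _ HG); [left; eapply part_elem; eauto|right; eapply part_elem; eauto].
Qed.

Lemma nth_map_lt {T U} (f : T -> U) L i d d' : (i < length L)%nat -> nth i (map f L) d = f (nth i L d').
Proof. intros; rewrite (nth_indep _ d (f d')) by (rewrite length_map; auto); apply map_nth. Qed.

Lemma part_map {X} (A : set (set X)) G L E : is_algebra A -> A E -> is_partition A G L ->
  is_partition A (fun x => G x /\ E x) (map (fun H x => H x /\ E x) L).
Proof.
  intros HA HE [A1 [D1 U1]]. split; [|split].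
  - intros F HF. apply in_map_iff in HF as [H [<- HH]]. apply alg_inter; auto.
  - intros i j Hi Hj Hij. rewrite length_map in Hi, Hj.
    rewrite (nth_map_lt _ L i _ (fun _ => False) Hi), (nth_map_lt _ L j _ (fun _ => False) Hj).
    intros x [[? _] [? _]]. apply (D1 i j Hi Hj Hij x); auto.
  - intro x; split.
    + intros [Gx Ex]. destruct (proj1 (U1 x) Gx) as [H [HH Hx]]. exists (fun y => H y /\ E y); split; auto.
      apply in_map_iff; eauto.
    + intros [F [HF Fx]]. apply in_map_iff in HF as [H [<- HH]]. destruct Fx. split; auto. apply U1; eauto.
Qed.

Lemma abs_sum_app {X} (mu : setfun X) L1 L2 : abs_sum mu (L1 ++ L2) = abs_sum mu L1 + abs_sum mu L2.
Proof. induction L1; simpl; [lra|]. unfold abs_sum in *; simpl. rewrite IHL1; lra. Qed.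

Lemma abs_sum_PA {X} (A : set (set X)) nu L : PA A nu -> (forall F, In F L -> A F) ->
  abs_sum nu L = fold_right (fun F s => nu F + s) 0 L.
Proof.
  intros [_ Hp]. induction L as [|F L IH]; intros HL; [reflexivity|].
  unfold abs_sum in *; simpl. rewrite IH by (intros; apply HL; right; auto).
  rewrite Rabs_right; [reflexivity|]. apply Rle_ge, Hp, HL; left; auto.
Qed.

Lemma lub_unique (P : R -> Prop) a b : is_lub P a -> is_lub P b -> a = b.
Proof. intros [Ha1 Ha2] [Hb1 Hb2]. apply Rle_antisym; auto. Qed.

Lemma PA_var {X} (A : set (set X)) nu E : is_algebra A -> PA A nu -> A E -> var A nu E = nu E.
Proof.
  intros HA HP HE.
  assert (Hl : is_lub (var_values A nu E) (nu E)).
  { split.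
    - intros s [L [HL ->]]. rewrite (abs_sum_PA A nu L HP (proj1 HL)).
      rewrite (part_sum A nu HA (proj1 HP) L E HE HL); lra.
    - intros b Hb. apply Hb. exists (E :: nil); split; [apply part_single; auto|].
      unfold abs_sum; simpl. rewrite Rabs_right; [lra|]. apply Rle_ge, (proj2 HP); auto. }
  unfold var. apply (lub_unique (var_values A nu E)); auto.
  apply epsilon_spec; eauto.
Qed.

Lemma PA_ba {X} (A : set (set X)) nu : is_algebra A -> PA A nu -> ba A nu.
Proof.
  intros HA HP. split; [apply HP|]. exists (nu (fun _ => True)).
  intros s [L [HL ->]]. rewrite (abs_sum_PA A nu L HP (proj1 HL)).
  rewrite (part_sum A nu HA (proj1 HP) L _ (alg_full A HA) HL); lra.
Qed.

Lemma var_lub {X} (A : set (set X)) mu E : is_algebra A -> ba A mu -> A E ->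
  is_lub (var_values A mu E) (var A mu E).
Proof.
  intros HA [Hadd [K HK]] HE. unfold var. apply epsilon_spec.
  destruct (completeness (var_values A mu E)) as [v Hv]; [|exists (Rabs (mu E))|exists v; auto].
  - exists K. intros s [L [HL ->]].
    assert (HP : is_partition A (fun x => E x \/ ~ E x) (L ++ (fun x => ~ E x) :: nil)).
    { apply part_app; auto. apply part_single; apply alg_compl; auto. intros x; tauto. }
    replace (fun x => E x \/ ~ E x) with (fun _ : X => True) in HP by (apply set_ext; intro x; tauto).
    assert (H := HK _ (ex_intro _ _ (conj HP eq_refl))). rewrite abs_sum_app in H.
    unfold abs_sum at 2 in H; simpl in H. pose proof (Rabs_pos (mu (fun x => ~ E x))). lra.
  - exists (E :: nil); split; [apply part_single; auto|]. unfold abs_sum; simpl; lra.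
Qed.

Lemma var_ge {X} (A : set (set X)) mu E : is_algebra A -> ba A mu -> A E -> Rabs (mu E) <= var A mu E.
Proof.
  intros HA Hb HE. apply (proj1 (var_lub A mu E HA Hb HE)).
  exists (E :: nil); split; [apply part_single; auto|]. unfold abs_sum; simpl; lra.
Qed.

Lemma var_add {X} (A : set (set X)) mu E F : is_algebra A -> ba A mu -> A E -> A F -> disjoint E F ->
  var A mu (fun x => E x \/ F x) = var A mu E + var A mu F.
Proof.
  intros HA Hb HE HF Hd.
  assert (HEF : A (fun x => E x \/ F x)) by (apply alg_union; auto).
  pose proof (var_lub A mu E HA Hb HE) as [UE LE].
  pose proof (var_lub A mu F HA Hb HF) as [UF LF].
  pose proof (var_lub A mu _ HA Hb HEF) as [U LU].
  apply Rle_antisym.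
  - apply LU. intros s [L [HL ->]].
    assert (H1 := part_map A _ L E HA HE HL). assert (H2 := part_map A _ L F HA HF HL).
    cbv beta in H1, H2.
    replace (fun x => (E x \/ F x) /\ E x) with E in H1 by (apply set_ext; intro x; tauto).
    replace (fun x => (E x \/ F x) /\ F x) with F in H2.
    2:{ apply set_ext; intro x; split; [|tauto]. intro Fx; split; auto. }
    assert (Hs : abs_sum mu L <= abs_sum mu (map (fun H x => H x /\ E x) L) + abs_sum mu (map (fun H x => H x /\ F x) L)).
    { assert (HLs : forall H, In H L -> A H /\ forall x, H x -> E x \/ F x).
      { intros H HH; split; [apply (proj1 HL); auto|]. intros x Hx; exact (part_elem A _ L H x HL HH Hx). }
      clear H1 H2 HL. induction L as [|H L IH]; [unfold abs_sum; simpl; lra|].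
      unfold abs_sum in *; simpl.
      assert (IH' := IH (fun G HG => HLs G (or_intror HG))).
      destruct (HLs H (or_introl eq_refl)) as [AH HH].
      replace H with (fun x => (fun y => H y /\ E y) x \/ (fun y => H y /\ F y) x) at 1.
      2:{ apply set_ext; intro x; split; [intros [[? ?]|[? ?]]; auto|]. intro Hx; destruct (HH x Hx); tauto. }
      rewrite (proj1 Hb); [| apply alg_inter; auto | apply alg_inter; auto | intros x [[? ?] [? ?]]; apply (Hd x); auto].
      pose proof (Rabs_triang (mu (fun y => H y /\ E y)) (mu (fun y => H y /\ F y))). lra. }
    assert (s1 := UE _ (ex_intro _ _ (conj H1 eq_refl))).
    assert (s2 := UF _ (ex_intro _ _ (conj H2 eq_refl))). lra.
  - assert (Hk : forall s1 s2, var_values A mu E s1 -> var_values A mu F s2 -> s1 + s2 <= var A mu (fun x => E x \/ F x)).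
    { intros s1 s2 [L1 [HL1 ->]] [L2 [HL2 ->]]. apply U. exists (L1 ++ L2); split.
      - apply part_app; auto.
      - rewrite abs_sum_app; auto. }
    assert (Hne : var_values A mu F (Rabs (mu F))).
    { exists (F :: nil); split; [apply part_single; auto|]. unfold abs_sum; simpl; lra. }
    assert (HvE : var A mu E <= var A mu (fun x => E x \/ F x) - var A mu F).
    { assert (forall s2, var_values A mu F s2 -> var A mu E <= var A mu (fun x => E x \/ F x) - s2).
      { intros s2 H2. apply LE. intros s1 H1. specialize (Hk s1 s2 H1 H2). lra. }
      assert (var A mu F <= var A mu (fun x => E x \/ F x) - var A mu E).
      { apply LF. intros s2 H2. specialize (H s2 H2). lra. }
      lra. }
    lra.
Qed.

Lemma var_PA {X} (A : set (set X)) mu : is_algebra A -> ba A mu -> PA A (var A mu).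
Proof.
  intros HA Hb. split.
  - intros E F HE HF Hd; apply var_add; auto.
  - intros E HE. pose proof (var_ge A mu E HA Hb HE). pose proof (Rabs_pos (mu E)). lra.
Qed.

Lemma PA_mono {X} (A : set (set X)) nu E F : is_algebra A -> PA A nu -> A E -> A F ->
  (forall x, E x -> F x) -> nu E <= nu F.
Proof.
  intros HA [Hadd Hp] HE HF Hs.
  replace F with (fun x => E x \/ (F x /\ ~ E x)).
  - rewrite Hadd; auto. pose proof (Hp _ (alg_diff A F E HA HF HE)); lra.
    apply alg_diff; auto. intros x [? [? ?]]; tauto.
  - apply set_ext; intro x; split; [intros [?|[? ?]]; auto|]. intro Fx; destruct (classic (E x)); tauto.
Qed.

Lemma PA_union_diff {X} (A : set (set X)) nu E F : is_algebra A -> PA A nu -> A E -> A F ->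
  nu (fun x => E x \/ F x) = nu F + nu (fun x => E x /\ ~ F x).
Proof.
  intros HA HP HE HF.
  replace (fun x => E x \/ F x) with (fun x => F x \/ (E x /\ ~ F x)).
  - apply (proj1 HP); auto. apply alg_diff; auto. intros x [? [? ?]]; tauto.
  - apply set_ext; intro x; split; [intros [?|[? ?]]; auto|]. intros [?|?]; [destruct (classic (F x))|]; tauto.
Qed.

Lemma PA_union_le {X} (A : set (set X)) nu E F : is_algebra A -> PA A nu -> A E -> A F ->
  nu (fun x => E x \/ F x) <= nu E + nu F.
Proof.
  intros HA HP HE HF. rewrite (PA_union_diff A nu E F); auto.
  pose proof (PA_mono A nu (fun x => E x /\ ~ F x) E HA HP (alg_diff A E F HA HE HF) HE (fun x H => proj1 H)).
  lra.
Qed.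

Definition w (n : nat) : R := (/2) ^ (S n).

Lemma w_pos n : 0 < w n.
Proof. unfold w; apply pow_lt; lra. Qed.

Lemma hpow_pos n : 0 < (/2) ^ n.
Proof. apply pow_lt; lra. Qed.

Lemma w_partial K : sum_f_R0 w K = 1 - (/2) ^ (S K).
Proof.
  induction K; [simpl; unfold w; simpl; lra|]. simpl sum_f_R0. rewrite IHK. unfold w.
  change ((/2)^(S (S K))) with (/2 * (/2)^(S K)). lra.
Qed.

Lemma w_inf : infinite_sum w 1.
Proof.
  intros eps Heps. destruct (pow_lt_1_zero (/2) ltac:(rewrite Rabs_right; lra) eps Heps) as [N HN].
  exists N; intros n Hn. rewrite w_partial. unfold Rdist.
  replace (1 - (/2) ^ S n - 1) with (- (/2)^(S n)) by ring. rewrite Rabs_Ropp. apply HN; lia.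
Qed.

Definition clamp (c : R) : R := Rmax 0 (Rmin 1 c).
Lemma clamp_range c : 0 <= clamp c <= 1.
Proof. unfold clamp, Rmax, Rmin; repeat destruct Rle_dec; lra. Qed.
Lemma clamp_id c : 0 <= c <= 1 -> clamp c = c.
Proof. intros; unfold clamp, Rmax, Rmin; repeat destruct Rle_dec; lra. Qed.

Lemma ser_ex (f : nat -> R) : {l | infinite_sum (fun n => w n * clamp (f n)) l}.
Proof.
  destruct (Rseries_CV_comp (fun n => w n * clamp (f n)) w) as [l Hl].
  - intro n; pose proof (clamp_range (f n)); pose proof (w_pos n); split; [nra|nra].
  - exists 1; exact w_inf.
  - exists l; exact Hl.
Qed.

Definition ser (f : nat -> R) : R := proj1_sig (ser_ex f).
Lemma ser_spec f : infinite_sum (fun n => w n * clamp (f n)) (ser f).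
Proof. unfold ser; destruct (ser_ex f); auto. Qed.

Lemma lim_le (a : nat -> R) l B : infinite_sum a l -> (forall N, sum_f_R0 a N <= B) -> l <= B.
Proof.
  intros Ha HB. destruct (Rle_lt_dec l B) as [|Hlt]; auto.
  destruct (Ha (l - B) ltac:(lra)) as [N HN]. specialize (HN N (le_n _)). specialize (HB N).
  unfold Rdist in HN. apply Rabs_def2 in HN. lra.
Qed.

Lemma inf_sum_plus a b la lb : infinite_sum a la -> infinite_sum b lb ->
  infinite_sum (fun n => a n + b n) (la + lb).
Proof.
  intros Ha Hb eps He. destruct (CV_plus _ _ _ _ Ha Hb eps He) as [N HN].
  exists N; intros n Hn. rewrite plus_sum. apply HN; auto.
Qed.

Lemma inf_sum_ext a b l : (forall n, a n = b n) -> infinite_sum a l -> infinite_sum b l.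
Proof.
  intros H Ha eps He. destruct (Ha eps He) as [N HN]. exists N; intros n Hn.
  rewrite <- (sum_eq a b n (fun i _ => H i)). apply HN; auto.
Qed.

Lemma term_nonneg f n : 0 <= w n * clamp (f n).
Proof. pose proof (clamp_range (f n)); pose proof (w_pos n); nra. Qed.

Lemma ser_ge_term f n : w n * clamp (f n) <= ser f.
Proof.
  assert (H : w n * clamp (f n) <= sum_f_R0 (fun n => w n * clamp (f n)) n).
  { destruct n; simpl; [lra|]. pose proof (cond_pos_sum (fun n => w n * clamp (f n)) n (term_nonneg f)). lra. }
  pose proof (sum_incr _ n _ (ser_spec f) (term_nonneg f)). lra.
Qed.

Lemma ser_ge0 f : 0 <= ser f.
Proof. pose proof (ser_ge_term f 0); pose proof (term_nonneg f 0); lra. Qed.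

Lemma ser_tail f N eta : (forall n, (n <= N)%nat -> clamp (f n) <= eta) -> 0 <= eta ->
  ser f <= eta + (/2) ^ (S N).
Proof.
  intros Hf He. set (a := fun n => w n * clamp (f n)).
  assert (C1 : forall K, (K <= N)%nat -> sum_f_R0 a K <= eta * (1 - (/2)^(S K))).
  { induction K; intros HK.
    - simpl. unfold a, w. simpl. specialize (Hf 0%nat HK). nra.
    - simpl sum_f_R0. specialize (IHK ltac:(lia)). unfold a at 2, w.
      specialize (Hf (S K) HK). pose proof (hpow_pos (S (S K))).
      change ((/2)^(S (S K))) with (/2 * (/2)^(S K)) in *. nra. }
  assert (C2 : forall d, sum_f_R0 a (N + d) <= eta + (/2)^(S N) - (/2)^(S (N + d))).
  { induction d.
    - rewrite Nat.add_0_r. specialize (C1 N (le_n _)). pose proof (hpow_pos (S N)). nra.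
    - rewrite Nat.add_succ_r. simpl sum_f_R0. unfold a at 2, w.
      pose proof (clamp_range (f (S (N + d)))). pose proof (hpow_pos (S (N + d))).
      change ((/2)^(S (S (N + d)))) with (/2 * (/2)^(S (N + d))) in *. nra. }
  apply (lim_le a). apply ser_spec. intro K.
  destruct (Nat.le_gt_cases K N) as [HK|HK].
  - specialize (C1 K HK). pose proof (hpow_pos (S K)). pose proof (hpow_pos (S N)). nra.
  - replace K with (N + (K - N))%nat by lia. specialize (C2 (K - N)%nat).
    pose proof (hpow_pos (S (N + (K - N)))). lra.
Qed.

Lemma ser_cons f g : (forall n, g (S n) = f n) -> ser f <= 2 * ser g.
Proof.
  intros Hg. set (a := fun n => w n * clamp (f n)). set (b := fun n => w n * clamp (g n)).
  assert (C : forall K, sum_f_R0 b (S K) = b 0%nat + /2 * sum_f_R0 a K).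
  { induction K.
    - simpl. unfold a, b, w. rewrite Hg. simpl. lra.
    - change (sum_f_R0 b (S (S K))) with (sum_f_R0 b (S K) + b (S (S K))). rewrite IHK.
      simpl sum_f_R0. unfold a, b, w. rewrite Hg.
      change ((/2)^(S (S (S K)))) with (/2 * (/2)^(S (S K))). lra. }
  apply (lim_le a). apply ser_spec. intro K.
  pose proof (sum_incr b (S K) _ (ser_spec g) (term_nonneg g)).
  rewrite C in H. pose proof (term_nonneg g 0). change (w 0 * clamp (g 0%nat)) with (b 0%nat) in H0.
  lra.
Qed.

Definition rho {X} (A : set (set X)) (mu : setfun X) (E : set X) : R :=
  var A mu E / Rmax 1 (bnorm A mu).

Definition mm {X} (A : set (set X)) (s : nat -> setfun X) : setfun X :=
  fun E => ser (fun n => rho A (s n) E).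

Lemma Rmax1 a : 1 <= Rmax 1 a.
Proof. apply Rmax_l. Qed.

Lemma rho_range {X} (A : set (set X)) mu E : is_algebra A -> ba A mu -> A E -> 0 <= rho A mu E <= 1.
Proof.
  intros HA Hb HE. pose proof (var_PA A mu HA Hb) as HP.
  pose proof (proj2 HP E HE).
  pose proof (PA_mono A _ E _ HA HP HE (alg_full A HA) (fun _ _ => I)).
  pose proof (Rmax1 (bnorm A mu)). pose proof (Rmax_r 1 (bnorm A mu)).
  unfold rho, bnorm in *. split.
  - apply Rmult_le_pos; auto. left; apply Rinv_0_lt_compat; lra.
  - apply (Rmult_le_reg_r (Rmax 1 (var A mu (fun _ => True)))); [lra|].
    unfold Rdiv; rewrite Rmult_assoc, Rinv_l by lra. lra.
Qed.

Lemma var_rho {X} (A : set (set X)) mu E : var A mu E = Rmax 1 (bnorm A mu) * rho A mu E.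
Proof. unfold rho. pose proof (Rmax1 (bnorm A mu)). field. lra. Qed.

Lemma rho_add {X} (A : set (set X)) mu E F : is_algebra A -> ba A mu -> A E -> A F -> disjoint E F ->
  rho A mu (fun x => E x \/ F x) = rho A mu E + rho A mu F.
Proof. intros. unfold rho. rewrite var_add; auto. unfold Rdiv; ring. Qed.

Lemma mm_spec {X} (A : set (set X)) s E : is_algebra A -> (forall n, ba A (s n)) -> A E ->
  infinite_sum (fun n => w n * rho A (s n) E) (mm A s E).
Proof.
  intros HA Hb HE. apply (inf_sum_ext (fun n => w n * clamp (rho A (s n) E))); [|apply ser_spec].
  intro n; rewrite clamp_id; auto. apply rho_range; auto.
Qed.

Lemma mm_PA {X} (A : set (set X)) s : is_algebra A -> (forall n, ba A (s n)) -> PA A (mm A s).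
Proof.
  intros HA Hb. split.
  - intros E F HE HF Hd. apply (uniqueness_sum (fun n => w n * rho A (s n) (fun x => E x \/ F x))).
    + apply mm_spec; auto. apply alg_union; auto.
    + apply (inf_sum_ext (fun n => w n * rho A (s n) E + w n * rho A (s n) F)).
      * intro n; rewrite rho_add; auto; ring.
      * apply inf_sum_plus; apply mm_spec; auto.
  - intros E HE. apply ser_ge0.
Qed.

Lemma mm_ge {X} (A : set (set X)) s E n : is_algebra A -> (forall n, ba A (s n)) -> A E ->
  w n * rho A (s n) E <= mm A s E.
Proof.
  intros HA Hb HE. pose proof (ser_ge_term (fun n => rho A (s n) E) n). simpl in H.
  rewrite clamp_id in H; auto. apply rho_range; auto.
Qed.

Lemma mm_AM {X} (A : set (set X)) (M : set (setfun X)) s : is_algebra A -> (forall mu, M mu -> ba A mu) ->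
  (forall n, M (s n)) -> in_AM A M (mm A s).
Proof.
  intros HA HM Hs. exists s, w. split; [auto|]. split; [intro n; left; apply w_pos|]. split; [apply w_inf|].
  intros E HE. apply (inf_sum_ext (fun n => w n * rho A (s n) E)).
  - intro n; unfold rho, Rdiv; ring.
  - apply mm_spec; auto.
Qed.

Definition scons {X} (mu : setfun X) (s : nat -> setfun X) (n : nat) : setfun X :=
  match n with O => mu | S k => s k end.

Lemma mm_cons {X} (A : set (set X)) mu s E : is_algebra A -> ba A mu -> (forall n, ba A (s n)) -> A E ->
  mm A s E <= 2 * mm A (scons mu s) E /\ rho A mu E <= 2 * mm A (scons mu s) E.
Proof.
  intros HA Hmu Hb HE.
  assert (Hb' : forall n, ba A (scons mu s n)) by (intros [|n]; simpl; auto).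
  split.
  - unfold mm. apply ser_cons. intro n; reflexivity.
  - pose proof (mm_ge A (scons mu s) E 0 HA Hb' HE). simpl in H. unfold w in H. simpl in H. lra.
Qed.

Lemma mm_dom {X} (A : set (set X)) s t : is_algebra A -> (forall n, ba A (s n)) -> (forall n, ba A (t n)) ->
  (forall n, exists j, t j = s n) ->
  forall eps, 0 < eps -> exists delta, 0 < delta /\ forall E, A E -> mm A t E < delta -> mm A s E < eps.
Proof.
  intros HA Hs Ht Hj eps He.
  destruct (pow_lt_1_zero (/2) ltac:(rewrite Rabs_right; lra) (eps/2) ltac:(lra)) as [N HN].
  assert (HNp := HN (S N) ltac:(lia)). rewrite Rabs_right in HNp by (left; apply hpow_pos).
  assert (C : forall N', exists delta, 0 < delta /\ forall n, (n <= N')%nat -> forall E, A E ->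
      mm A t E < delta -> rho A (s n) E <= eps / 2).
  { assert (single : forall n, exists delta, 0 < delta /\ forall E, A E -> mm A t E < delta -> rho A (s n) E <= eps/2).
    { intro n. destruct (Hj n) as [j Htj]. exists (w j * (eps/2)). split; [pose proof (w_pos j); nra|].
      intros E HE Hlt. pose proof (mm_ge A t E j HA Ht HE). rewrite Htj in H.
      pose proof (w_pos j). apply (Rmult_le_reg_l (w j)); auto. lra. }
    induction N'.
    - destruct (single 0%nat) as [d [Hd Hd']]. exists d; split; auto. intros n Hn; replace n with 0%nat by lia; auto.
    - destruct IHN' as [d1 [Hd1 Hd1']]. destruct (single (S N')) as [d2 [Hd2 Hd2']].
      exists (Rmin d1 d2); split; [apply Rmin_pos; auto|]. intros n Hn E HE Hlt.
      pose proof (Rmin_l d1 d2). pose proof (Rmin_r d1 d2).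
      destruct (Nat.le_gt_cases n N') as [Hn'|Hn'].
      + apply Hd1'; auto; lra.
      + replace n with (S N') by lia. apply Hd2'; auto; lra. }
  destruct (C N) as [d [Hd Hd']]. exists d; split; auto. intros E HE Hlt.
  assert (H := ser_tail (fun n => rho A (s n) E) N (eps/2)).
  unfold mm at 1. apply Rle_lt_trans with (eps/2 + (/2)^(S N)); [|lra].
  apply H; [|lra]. intros n Hn. rewrite clamp_id by (apply rho_range; auto). apply Hd'; auto.
Qed.

Definition hides {X} (A : set (set X)) (l nu : setfun X) (t : R) : Prop :=
  forall delta, 0 < delta -> exists E, A E /\ nu E < delta /\ t <= l E.

Definition gg {X} (A : set (set X)) (l nu : setfun X) : R :=
  epsilon (inhabits 0) (fun v => is_lub (hides A l nu) v).

Lemma hides0 {X} (A : set (set X)) l nu : is_algebra A -> PA A l -> PA A nu -> hides A l nu 0.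
Proof.
  intros HA Hl Hn d Hd. exists (fun _ => False). split; [apply alg_empty; auto|].
  rewrite (add_empty A nu HA (proj1 Hn)), (add_empty A l HA (proj1 Hl)). lra.
Qed.

Lemma gg_spec {X} (A : set (set X)) l nu : is_algebra A -> PA A l -> PA A nu ->
  is_lub (hides A l nu) (gg A l nu).
Proof.
  intros HA Hl Hn. unfold gg. apply epsilon_spec.
  destruct (completeness (hides A l nu)) as [v Hv]; [|exists 0; apply hides0; auto|exists v; auto].
  exists (l (fun _ => True)). intros t Ht. destruct (Ht 1 ltac:(lra)) as [E [HE [_ Ht']]].
  pose proof (PA_mono A l E _ HA Hl HE (alg_full A HA) (fun _ _ => I)). lra.
Qed.

Lemma gg_ge0 {X} (A : set (set X)) l nu : is_algebra A -> PA A l -> PA A nu -> 0 <= gg A l nu.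
Proof. intros HA Hl Hn. apply (proj1 (gg_spec A l nu HA Hl Hn)). apply hides0; auto. Qed.

Lemma gg_mono {X} (A : set (set X)) l nu nu' : is_algebra A -> PA A l -> PA A nu -> PA A nu' ->
  (forall eps, 0 < eps -> exists delta, 0 < delta /\ forall E, A E -> nu' E < delta -> nu E < eps) ->
  gg A l nu' <= gg A l nu.
Proof.
  intros HA Hl Hn Hn' Hd. apply (proj2 (gg_spec A l nu' HA Hl Hn')).
  intros t Ht. apply (proj1 (gg_spec A l nu HA Hl Hn)).
  intros d Hdp. destruct (Hd d Hdp) as [d' [Hd' Hd'']]. destruct (Ht d' Hd') as [E [HE [H1 H2]]].
  exists E; auto.
Qed.

Lemma key {X} (A : set (set X)) l t mu eps eta : is_algebra A -> PA A l -> (forall n, ba A (t n)) -> ba A mu ->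
  0 < eps -> (forall delta, 0 < delta -> exists E, A E /\ mm A t E < delta /\ eps <= var A mu E) ->
  0 < eta -> (forall E, A E -> l E < eta -> var A mu E < eps / 2) ->
  forall tau, hides A l (mm A (scons mu t)) tau -> hides A l (mm A t) (tau + eta).
Proof.
  intros HA Hl Hb Hmu He Hbad Heta Hac tau Hh delta Hd.
  set (c := Rmax 1 (bnorm A mu)). assert (Hc : 1 <= c) by apply Rmax1.
  set (d1 := Rmin (delta / 4) (eps / (4 * c))).
  assert (Hd1 : 0 < d1) by (apply Rmin_pos; [lra| apply Rdiv_lt_0_compat; lra]).
  destruct (Hh d1 Hd1) as [F [HF [HmF HlF]]].
  destruct (mm_cons A mu t F HA Hmu Hb HF) as [C1 C2].
  pose proof (Rmin_l (delta/4) (eps/(4*c))). pose proof (Rmin_r (delta/4) (eps/(4*c))). fold d1 in H, H0.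
  assert (HvF : var A mu F < eps / 2).
  { rewrite var_rho. fold c. assert (rho A mu F < eps / (2 * c)).
    { apply Rlt_le_trans with (2 * d1); [lra|]. replace (eps / (2 * c)) with (2 * (eps / (4 * c))) by (field; lra). lra. }
    apply Rlt_le_trans with (c * (eps / (2 * c))); [apply Rmult_lt_compat_l; lra|]. right; field; lra. }
  destruct (Hbad (delta / 2) ltac:(lra)) as [E [HE [HmE HvE]]].
  exists (fun x => E x \/ F x). split; [apply alg_union; auto|]. split.
  - pose proof (PA_union_le A (mm A t) E F HA (mm_PA A t HA Hb) HE HF). lra.
  - rewrite (PA_union_diff A l E F HA Hl HE HF).
    assert (eta <= l (fun x => E x /\ ~ F x)); [|lra].
    apply Rnot_lt_le; intro Hlt. apply Hac in Hlt; [|apply alg_diff; auto].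
    pose proof (var_PA A mu HA Hmu) as HPm.
    assert (HD : A (fun x => E x /\ ~ F x)) by (apply alg_diff; auto).
    pose proof (PA_mono A (var A mu) E (fun x => (E x /\ ~ F x) \/ F x) HA HPm HE (alg_union A _ _ HA HD HF)
      (fun x Ex => match classic (F x) with or_introl h => or_intror h | or_intror h => or_introl (conj Ex h) end)).
    pose proof (PA_union_le A (var A mu) _ F HA HPm HD HF). lra.
Qed.

Theorem mainTheorem14 (X : Type) (A : set (set X)) (HA : is_algebra A)
  (M : set (setfun X)) (HM : forall mu, M mu -> ba A mu) (HMne : exists mu, M mu) :
  (exists lam, ba A lam /\ forall mu, M mu -> in_ba_ac A lam mu) <->
  (exists m, in_AM A M m /\ forall mu, M mu -> in_ba_ac A m mu).
Proof.
  split.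
  - intros [lam [Hlam Hac]].
    set (l := var A lam). assert (Hl : PA A l) by (apply var_PA; auto).
    set (G := fun s => gg A l (mm A s)).
    assert (HbM : forall s : nat -> setfun X, (forall n, M (s n)) -> forall n, ba A (s n)) by auto.
    assert (HPs : forall s : nat -> setfun X, (forall n, M (s n)) -> PA A (mm A s)) by (intros; apply mm_PA; auto).
    set (Lset := fun b => forall s : nat -> setfun X, (forall n, M (s n)) -> b <= G s).
    destruct HMne as [mu0 H0].
    destruct (completeness Lset) as [dstar [Hub Hlub]].
    { exists (G (fun _ => mu0)). intros b Hb. apply Hb; auto. }
    { exists 0. intros s Hs. apply gg_ge0; auto. }
    assert (Hk : forall k : nat, exists s, (forall n, M (s n)) /\ G s < dstar + / (INR k + 1)).
    { intro k. apply NNPP; intro Hn.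
      assert (Lset (dstar + / (INR k + 1))).
      { intros s Hs. apply Rnot_lt_le. intro Hlt. apply Hn. eauto. }
      apply Hub in H. pose proof (pos_INR k). assert (0 < / (INR k + 1)) by (apply Rinv_0_lt_compat; lra). lra. }
    set (sk := fun k => proj1_sig (constructive_indefinite_description _ (Hk k))).
    assert (Hsk : forall k, (forall n, M (sk k n)) /\ G (sk k) < dstar + / (INR k + 1)).
    { intro k. unfold sk. destruct (constructive_indefinite_description _ (Hk k)); auto. }
    set (t := fun j => sk (fst (Cantor.of_nat j)) (snd (Cantor.of_nat j))).
    assert (Ht : forall j, M (t j)) by (intro j; apply Hsk).
    assert (Hdom : forall k, G t <= G (sk k)).
    { intro k. apply gg_mono; auto. apply HPs, Hsk.
      apply mm_dom; auto. apply HbM, Hsk.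
      intro n. exists (Cantor.to_nat (k, n)). unfold t. rewrite Cantor.cancel_of_to. reflexivity. }
    assert (Hmin : forall s, (forall n, M (s n)) -> G t <= G s).
    { intros s Hs. assert (dstar <= G s) by (apply Hlub; intros b Hb; apply Hb; auto).
      assert (G t <= dstar); [|lra].
      apply Rnot_lt_le; intro Hlt. destruct (archimed_cor1 (G t - dstar) ltac:(lra)) as [N [HN HN0]].
      assert (/ (INR N + 1) < / INR N).
      { assert (0 < INR N) by (apply lt_0_INR; lia). apply Rinv_lt_contravar; nra. }
      pose proof (Hdom N). pose proof (proj2 (Hsk N)). lra. }
    exists (mm A t). split; [apply mm_AM; auto|]. intros mu Hmu. split; [auto|].
    intros eps Heps. apply NNPP; intro Hno.
    assert (Hbad : forall delta, 0 < delta -> exists E, A E /\ mm A t E < delta /\ eps <= var A mu E).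
    { intros delta Hd. apply NNPP; intro Hn2. apply Hno. exists delta; split; auto.
      intros E HE Hv. rewrite (PA_var A (mm A t) E HA (HPs t Ht) HE) in Hv.
      apply Rnot_le_lt. intro Hle. apply Hn2. eauto. }
    destruct (Hac mu Hmu) as [_ Hac']. destruct (Hac' (eps / 2) ltac:(lra)) as [eta [Heta Heta']].
    assert (Hs' : forall n, M (scons mu t n)) by (intros [|n]; simpl; auto).
    assert (HK := key A l t mu eps eta HA Hl (HbM t Ht) (HM mu Hmu) Heps Hbad Heta Heta').
    assert (G (scons mu t) <= G t - eta).
    { apply (proj2 (gg_spec A l _ HA Hl (HPs _ Hs'))). intros tau Htau.
      pose proof (proj1 (gg_spec A l _ HA Hl (HPs _ Ht)) _ (HK tau Htau)). unfold G; lra. }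
    pose proof (Hmin _ Hs'). lra.
  - intros [m [[mu [alpha [Hmu [Hal [Hsum Hser]]]]] Hac]]. exists m. split; [|auto].
    assert (Hbm : forall n, ba A (mu n)) by auto.
    apply PA_ba; auto. split.
    + intros E F HE HF Hd.
      apply (uniqueness_sum (fun n => alpha n * var A (mu n) (fun x => E x \/ F x) / Rmax 1 (bnorm A (mu n)))).
      * apply Hser, alg_union; auto.
      * apply (inf_sum_ext (fun n => alpha n * var A (mu n) E / Rmax 1 (bnorm A (mu n)) +
                                     alpha n * var A (mu n) F / Rmax 1 (bnorm A (mu n)))).
        -- intro n. rewrite var_add; auto. unfold Rdiv; ring.
        -- apply inf_sum_plus; apply Hser; auto.
    + intros E HE.
      assert (Hnn : forall n, 0 <= alpha n * var A (mu n) E / Rmax 1 (bnorm A (mu n))).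
      { intro n. pose proof (Rmax1 (bnorm A (mu n))). unfold Rdiv. apply Rmult_le_pos.
        - apply Rmult_le_pos; auto. apply (proj2 (var_PA A (mu n) HA (Hbm n))); auto.
        - left; apply Rinv_0_lt_compat; lra. }
      pose proof (sum_incr _ 0 _ (Hser E HE) Hnn). simpl in H. pose proof (Hnn 0%nat). lra.
Qed.
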